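(* Let $\alpha>0$, $a,c\in\mathbb C$, and $g(z)=\exp\left(\alpha az+\frac{\alpha}{2}cz^2\right)$ for $z\in\mathbb C$. If $1\le p<\infty$, then $g\in\mathcal{H}^1_{p,\alpha}$ if and only if $|c|<1$, and in this case \[ \|g\|_{p,\alpha}=\frac{1}{(1-|c|^2)^{1/(2p)}}\exp\left(\frac{\alpha}{2}\,\frac{|a|^2+\Re(\overline c a^2)}{1-|c|^2}\right). \]
   Context: For $\alpha>0$, $\gamma^1_\alpha(dz)=(\alpha/\pi)e^{-\alpha|z|^2}\lambda(dz)$ on $\mathbb C$, with $\lambda$ Lebesgue measure. $\mathcal{H}^1_{p,\alpha}$ is the space of entire functions $f$ with $\|f\|_{p,\alpha}:=\left(\int_{\mathbb C}|f|^p\,d\gamma^1_{\alpha p/2}\right)^{1/p}<\infty$. *)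

(* Defs.v *)
From HB Require Import structures.
From mathcomp Require Import all_boot all_order all_algebra.
From mathcomp Require Import all_classical all_reals all_analysis.
From mathcomp Require Import complex.
Set Implicit Arguments. Unset Strict Implicit. Unset Printing Implicit Defensive.
Import Order.TTheory GRing.Theory Num.Theory.
Local Open Scope ring_scope.

Definition cmod (R : realType) (z : R[i]) : R := Normc.normc z.

Section Fock.
Variable R : realType.

Definition cexp (w : R[i]) : R[i] :=
  ((expR (complex.Re w))%:C * (cos (complex.Im w) +i* sin (complex.Im w)))%C.

Definition cderivable_at (f : R[i] -> R[i]) (z : R[i]) : Prop :=
  exists f' : R[i], forall e : R, 0 < e -> exists d : R, 0 < d /\
    forall h : R[i], h != 0 -> cmod h < d ->
      cmod ((f (z + h) - f z) / h - f') < e.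

Definition entire (f : R[i] -> R[i]) : Prop := forall z, cderivable_at f z.

Definition gauss_density (beta : R) (z : R[i]) : R :=
  beta / pi * expR (- beta * cmod z ^+ 2).

(* \int_C |f|^p d gamma^1_{alpha p / 2}, as an extended real;
   C is identified with R x R via (x,y) |-> x + iy, lambda = Lebesgue on R^2 *)
Definition Lp_integral (p alpha : R) (f : R[i] -> R[i]) : \bar R :=
  (\int[(@lebesgue_measure R \x @lebesgue_measure R)%E]_(xy in setT)
     ((cmod (f (xy.1 +i* xy.2)%C)) `^ p *
        gauss_density (alpha * p / 2) (xy.1 +i* xy.2)%C)%:E)%E.

Definition in_Hpa (p alpha : R) (f : R[i] -> R[i]) : Prop :=
  entire f /\ (Lp_integral p alpha f < +oo)%E.

(* ||f||_{p,alpha} (meaningful when the integral is finite) *)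
Definition norm_pa (p alpha : R) (f : R[i] -> R[i]) : R :=
  (fine (Lp_integral p alpha f)) `^ (1 / p).

Definition gfun (alpha : R) (a c : R[i]) (z : R[i]) : R[i] :=
  cexp (alpha%:C * a * z + (alpha / 2)%:C * c * z ^+ 2)%C.

End Fock.

(* Main.v *)
Require Import Defs.
From HB Require Import structures.
From mathcomp Require Import all_boot all_order all_algebra.
From mathcomp Require Import all_classical all_reals all_analysis.
From mathcomp Require Import complex.
From mathcomp Require Import ring lra.
From mathcomp Require Import measurable_realfun.
Import Order.TTheory GRing.Theory Num.Theory.
Import numFieldNormedType.Exports.
Local Open Scope ring_scope.
Section B.
Variable R : realType.
Implicit Types u v z : R[i].

Lemma deriv_small (f : R -> R) (d : R) : is_derive (0:R) (1:R) f d ->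
  forall e : R, 0 < e -> exists del : R, 0 < del /\
   forall h : R, `|h| < del -> `|f h - f 0 - h * d| <= e * `|h|.
Proof.
move=> [df dv] e e0.
have := df; rewrite /derivable => /cvg_ex [l hl].
have ld : l = d by rewrite -dv /derive (cvg_lim _ hl).
subst l.
move/cvgrPdist_le : hl => /(_ e e0).
rewrite near_withinE => /nbhs_ballP [del del0 Hb].
exists del; split => // h hd.
have [->|h0] := eqVneq h 0.
  by rewrite subrr mul0r subr0 normr0 mulr0.
have hb : ball (0:R) del h by rewrite /ball /= sub0r normrN.
have /(_ h0) := Hb h hb.
move=> /=; rewrite /shift addr0 /GRing.scale /= mulr1.
have -> : f h - f 0 - h * d = - (h * (d - h^-1 * (f h - f 0))).
  by rewrite mulrBr mulrA divff // mul1r; ring.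
rewrite normrN normrM mulrC => H.
have := normr_ge0 h; nra.
Qed.

Lemma cmodE (x y : R) : cmod (x +i* y)%C = Num.sqrt (x ^+ 2 + y ^+ 2).
Proof. by []. Qed.

Lemma cmod_ge0 z : 0 <= cmod z.
Proof. by case: z => x y; rewrite cmodE sqrtr_ge0. Qed.

Lemma cmodM u v : cmod (u * v) = cmod u * cmod v.
Proof. exact: Normc.normcM. Qed.

Lemma cmodD u v : cmod (u + v) <= cmod u + cmod v.
Proof. exact: le_normcD. Qed.

Lemma cmodN u : cmod (- u) = cmod u.
Proof. exact: normcN. Qed.

Lemma cmodV u : cmod (u^-1) = (cmod u)^-1.
Proof. exact: Normc.normcV. Qed.

Lemma cmod_real (r : R) : cmod (r%:C)%C = `|r|.
Proof. by rewrite cmodE expr0n /= addr0 sqrtr_sqr. Qed.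

Lemma cmod2 z : cmod z ^+ 2 = complex.Re z ^+ 2 + complex.Im z ^+ 2.
Proof. by case: z => x y; rewrite cmodE /= sqr_sqrtr // addr_ge0 // sqr_ge0. Qed.

Lemma Re_le z : `|complex.Re z| <= cmod z.
Proof.
case: z => x y; rewrite cmodE /= -(sqrtr_sqr x) ler_wsqrtr //.
by rewrite lerDl sqr_ge0.
Qed.

Lemma Im_le z : `|complex.Im z| <= cmod z.
Proof.
case: z => x y; rewrite cmodE /= -(sqrtr_sqr y) ler_wsqrtr //.
by rewrite lerDr sqr_ge0.
Qed.

Lemma cmod_le z : cmod z <= `|complex.Re z| + `|complex.Im z|.
Proof.
case: z => x y; rewrite cmodE /=.
rewrite -(ger0_norm (addr_ge0 (normr_ge0 x) (normr_ge0 y))) -sqrtr_sqr.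
apply: ler_wsqrtr.
have hx : `|x| ^+ 2 = x ^+ 2 by apply: real_normK; exact: num_real.
have hy : `|y| ^+ 2 = y ^+ 2 by apply: real_normK; exact: num_real.
have := normr_ge0 x; have := normr_ge0 y; nra.
Qed.

Lemma cexpD u v : cexp (u + v) = cexp u * cexp v.
Proof.
case: u => x1 y1; case: v => x2 y2; rewrite /cexp /=.
rewrite expRD sinD cosD; simpc; congr (_ +i* _)%C; ring.
Qed.

Lemma cexp0 : cexp (0 : R[i]) = 1.
Proof. by rewrite /cexp /= expR0 cos0 sin0; simpc. Qed.

Lemma cmod_cexp u : cmod (cexp u) = expR (complex.Re u).
Proof.
rewrite /cexp cmodM cmod_real ger0_norm ?expR_ge0 // cmodE.
have -> : (cos (complex.Im u) ^+ 2 + sin (complex.Im u) ^+ 2) = 1 :> R.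
  exact: cos2Dsin2.
by rewrite sqrtr1 mulr1.
Qed.


Lemma cexp_small e : 0 < e -> exists d : R, 0 < d /\
  forall u, cmod u < d -> cmod (cexp u - 1 - u) <= e * cmod u.
Proof.
move=> e0; set e' := e / 8.
have e'0 : 0 < e' by rewrite /e' divr_gt0.
have [d1 [d10 H1]] := deriv_small _ _ (is_derive_expR 0) _ e'0.
have [d2 [d20 H2]] := deriv_small _ _ (is_derive_cos 0) _ e'0.
have [d3 [d30 H3]] := deriv_small _ _ (is_derive_sin 0) _ e'0.
have [d4 [d40 H4]] := deriv_small _ _ (is_derive_expR 0) _ ltr01.
have [d5 [d50 H5]] := deriv_small _ _ (is_derive_sin 0) _ ltr01.
pose d := Num.min d1 (Num.min d2 (Num.min d3 (Num.min d4 (Num.min d5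
   (Num.min (1/2) (e' / 4)))))).
exists d; split.
  rewrite /d !lt_min d10 d20 d30 d40 d50 /=; apply/andP; split; lra.
case=> x y hu.
have hx : `|x| <= cmod (x +i* y)%C := Re_le (x +i* y)%C.
have hy : `|y| <= cmod (x +i* y)%C := Im_le (x +i* y)%C.
move: hu; rewrite /d !lt_min => /and5P [hd1 hd2 hd3 hd4 /and3P [hd5 hd6 hd7]].
set r := cmod (x +i* y)%C in hx hy hd1 hd2 hd3 hd4 hd5 hd6 hd7 *.
have := H1 x (le_lt_trans hx hd1); rewrite ?expR0 ?mulr1.
have := H4 x (le_lt_trans hx hd4); rewrite ?expR0 ?mulr1 ?mul1r.
have := H2 y (le_lt_trans hy hd2); rewrite ?cos0 ?sin0 ?oppr0 ?mulr0 ?subr0.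
have := H3 y (le_lt_trans hy hd3); rewrite ?cos0 ?sin0 ?mulr1 ?subr0.
have := H5 y (le_lt_trans hy hd5); rewrite ?cos0 ?sin0 ?mulr1 ?subr0 ?mul1r.
set A := expR x - 1 - x; set B := cos y - 1; set C := sin y - y.
move=> hC1 hC hB hA1 hA.
have hre : complex.Re (cexp (x +i* y)%C - 1 - (x +i* y)%C) = A * cos y + (1 + x) * B.
  rewrite /cexp /= /A /B; ring.
have him : complex.Im (cexp (x +i* y)%C - 1 - (x +i* y)%C) = (A + x) * sin y + C.
  rewrite /cexp /= /A /C; ring.
apply: le_trans (cmod_le _) _; rewrite hre him.
have hcos : `|cos y| <= 1 := cos_max y.
have h1x : `|1 + x| <= 2.
  apply: le_trans (ler_normD _ _) _; rewrite normr1; lra.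
have hsin : `|sin y| <= 2 * `|y|.
  have -> : sin y = C + y by rewrite /C; ring.
  apply: le_trans (ler_normD _ _) _; lra.
have hAx : `|A + x| <= e' / 2.
  apply: le_trans (ler_normD _ _) _; lra.
have hR : `|A * cos y + (1 + x) * B| <= e' * `|x| + 2 * (e' * `|y|).
  apply: le_trans (ler_normD _ _) _; rewrite !normrM.
  have := normr_ge0 A; have := normr_ge0 B; have := normr_ge0 (cos y);
  have := normr_ge0 (1 + x); nra.
have hI : `|(A + x) * sin y + C| <= e' * `|y| + e' * `|y|.
  apply: le_trans (ler_normD _ _) _; rewrite !normrM.
  have := normr_ge0 (A + x); have := normr_ge0 (sin y); have := normr_ge0 y.
  nra.
have := normr_ge0 x; have := normr_ge0 y; rewrite /e' in hR hI *; nra.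
Qed.


Lemma cexp_quad_deriv (A B z : R[i]) :
  cderivable_at (fun z => cexp (A * z + B * z ^+ 2)) z.
Proof.
set q := fun z : R[i] => A * z + B * z ^+ 2.
set w0 := A + 2%:R * B * z.
exists (cexp (q z) * w0) => e e0.
set E := cmod (cexp (q z)).
have E0 : 0 < E by rewrite /E cmod_cexp expR_gt0.
set M := cmod w0 + cmod B + 1.
have M0 : 0 < M by rewrite /M; have := cmod_ge0 w0; have := cmod_ge0 B; lra.
set e1 := e / (2 * E * M).
have e10 : 0 < e1 by rewrite /e1 divr_gt0 // !mulr_gt0.
have [d1 [d10 H1]] := cexp_small _ e10.
exists (Num.min 1 (Num.min (d1 / M) (e / (2 * E * (cmod B + 1))))); split.
  rewrite !lt_min ltr01 divr_gt0 //= divr_gt0 // !mulr_gt0 //.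
  by have := cmod_ge0 B; lra.
move=> h h0; rewrite !lt_min => /and3P [hh1 hh2 hh3].
set w := w0 + B * h.
have hq : q (z + h) = q z + h * w by rewrite /q /w /w0; ring.
change (cmod ((cexp (q (z + h)) - cexp (q z)) / h - cexp (q z) * w0) < e).
rewrite hq cexpD.
have -> : (cexp (q z) * cexp (h * w) - cexp (q z)) / h - cexp (q z) * w0 =
    cexp (q z) * ((cexp (h * w) - 1 - h * w) / h + B * h).
  rewrite /w; field; exact: h0.
have hn0 : 0 < cmod h.
  rewrite lt_def cmod_ge0 andbT; apply/eqP => /Normc.eq0_normc /eqP.
  by rewrite (negbTE h0).
have hw : cmod w <= M.
  apply: le_trans (cmodD _ _) _; rewrite cmodM /M.
  have := cmod_ge0 B; have := cmod_ge0 w0; nra.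
have hhw : cmod (h * w) < d1.
  rewrite cmodM; have := cmod_ge0 w.
  move: hh2; rewrite ltr_pdivlMr // => hh2; nra.
have := H1 _ hhw; rewrite cmodM => hk.
rewrite cmodM -/E.
have hs : cmod ((cexp (h * w) - 1 - h * w) / h + B * h) <=
    e1 * cmod w + cmod B * cmod h.
  apply: le_trans (cmodD _ _) _; rewrite !cmodM cmodV.
  rewrite lerD2r ler_pdivrMr //.
  rewrite (_ : e1 * cmod w * cmod h = e1 * (cmod h * cmod w)) //; ring.
have hB := cmod_ge0 B.
move: hh3; rewrite ltr_pdivlMr; last by rewrite !mulr_gt0 //; lra.
move=> hh3.
have hwM : e1 * cmod w <= e1 * M by rewrite ler_pM2l.
have he1 : E * (e1 * M) = e / 2.
  by rewrite /e1; field; rewrite !gt_eqF.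
have hBh : E * (cmod B * cmod h) <= e / 2.
  have : cmod h * (2 * E * (cmod B + 1)) = 2 * E * (cmod B * cmod h) + 2 * E * cmod h.
    ring.
  nra.
apply: le_lt_trans (ler_wpM2l (ltW E0) hs) _.
rewrite mulrDr.
have : E * (e1 * cmod w) <= E * (e1 * M) by rewrite ler_pM2l.
nra.
Qed.

Lemma gfun_entire (alpha : R) (a c : R[i]) : entire (gfun alpha a c).
Proof. move=> z; exact: cexp_quad_deriv. Qed.

End B.

Local Open Scope classical_set_scope.
Section C.
Variable R : realType.
Local Notation mu := (@lebesgue_measure R).

Lemma gauss1 (K A B C : R) : 0 < K -> 0 < A ->
  (\int[mu]_x (K * expR (- A * x ^+ 2 + B * x + C))%:E =
   (K * Num.sqrt (pi / A) * expR (B ^+ 2 / (4 * A) + C))%:E)%E.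
Proof.
move=> K0 A0.
set s := Num.sqrt ((2 * A)^-1).
have s2 : s ^+ 2 = (2 * A)^-1 by rewrite sqr_sqrtr // invr_ge0; lra.
have s0 : s != 0.
  by apply/eqP => s0; move: s2; rewrite s0 expr0n /= => /esym/eqP; rewrite invr_eq0; lra.
set m := B / (2 * A).
have hpk : normal_peak s = (Num.sqrt (pi / A))^-1.
  rewrite /normal_peak; congr (_^-1); congr Num.sqrt.
  rewrite s2 -mulr_natr; field; lra.
have hpt : forall x, K * expR (- A * x ^+ 2 + B * x + C) =
    (K * Num.sqrt (pi / A) * expR (B ^+ 2 / (4 * A) + C)) * normal_pdf m s x.
  move=> x; rewrite normal_pdfE // /normal_fun hpk.
  have Sn0 : Num.sqrt (pi / A) != 0.
    by rewrite gt_eqF // sqrtr_gt0 divr_gt0 // pi_gt0.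
  rewrite (_ : - A * x ^+ 2 + B * x + C = (B ^+ 2 / (4 * A) + C) +
     (- (x - m) ^+ 2 / (s ^+ 2 *+ 2))); last first.
    rewrite s2 /m -mulr_natr; field; lra.
  rewrite expRD; field; exact: Sn0.
under eq_integral do rewrite hpt EFinM.
rewrite integralZl //; last exact: integrable_normal_pdf.
by rewrite integral_normal_pdf mule1.
Qed.


Lemma meas_quad1 (K A B C : R) :
  measurable_fun [set: R] (fun x => (K * expR (- A * x ^+ 2 + B * x + C))%:E).
Proof.
apply/measurable_EFinP; apply: measurable_funM => //.
apply: measurableT_comp; first exact: measurable_expR.
apply: measurable_funD => //; apply: measurable_funD.
  by apply: measurable_funM => //; exact: measurable_funX.
exact: measurable_funM.
Qed.

Lemma gauss1_inf (K A B C : R) : 0 < K -> A <= 0 ->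
  (\int[mu]_x (K * expR (- A * x ^+ 2 + B * x + C))%:E = +oo)%E.
Proof.
move=> K0 A0.
pose H : set R := if 0 <= B then `[0, +oo[%classic else `]-oo, 0]%classic.
have mH : measurable H by rewrite /H; case: ifP => _; exact: measurable_itv.
have muH : mu H = +oo%E.
  by rewrite /H; case: ifP => _; rewrite lebesgue_measure_itv /= ?ltry ?ltNyr.
apply/eqP; rewrite eq_le leey /=.
have f0 : forall x, [set: R] x -> (0 <= (K * expR (- A * x ^+ 2 + B * x + C))%:E)%E.
  by move=> x _; rewrite lee_fin mulr_ge0 // ?expR_ge0 // ltW.
apply: le_trans _ (ge0_subset_integral mu mH measurableT (meas_quad1 K A B C) f0 (@subsetT _ H)).
have hc : (\int[mu]_(x in H) (cst (K * expR C)%:E) x = +oo)%E.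
  rewrite integral_cst //.
  rewrite [X in (_ * X)%E](_ : _ = +oo%E); last exact: muH.
  by rewrite gt0_muley // lte_fin mulr_gt0 // expR_gt0.
rewrite -hc; apply: ge0_le_integral => //.
- by move=> x _; rewrite lee_fin mulr_ge0 // ?expR_ge0 // ltW.
- exact: measurable_funS (meas_quad1 K A B C).
move=> x Hx; rewrite lee_fin ler_pM2l // ler_expR lerDr.
have hA : 0 <= - A * x ^+ 2 by rewrite mulr_ge0 ?sqr_ge0 // oppr_ge0.
move: Hx; rewrite /H; case: ifP => hB /=; rewrite in_itv /= ?andbT => hx.
- by rewrite addr_ge0 // mulr_ge0.
- have : 0 <= B * x by rewrite nmulr_rge0 // ltNge hB.
  lra.
Qed.


Definition quad2 (K P Q S u v : R) (xy : R * R) : R :=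
  K * expR (- P * xy.1 ^+ 2 + (- Q) * xy.2 ^+ 2 + (- (2 * S)) * xy.1 * xy.2
            + u * xy.1 + v * xy.2).

Lemma meas_quad2 (K P Q S u v : R) :
  measurable_fun [set: R * R] (fun xy => (quad2 K P Q S u v xy)%:E).
Proof.
apply/measurable_EFinP; apply: measurable_funM => //.
apply: measurableT_comp; first exact: measurable_expR.
have m1 : measurable_fun [set: R * R] (fun xy : R * R => xy.1) := measurable_fst.
have m2 : measurable_fun [set: R * R] (fun xy : R * R => xy.2) := measurable_snd.
repeat apply: measurable_funD; repeat apply: measurable_funB;
  repeat apply: measurable_funM => //; try exact: measurable_funX.
Qed.

Definition gauss2_val (K P Q S u v : R) : R :=
  K * pi / Num.sqrt (P * Q - S ^+ 2) *
      expR ((Q * u ^+ 2 - 2 * S * u * v + P * v ^+ 2) / (4 * (P * Q - S ^+ 2))).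

Lemma gauss2 (K P Q S u v : R) : 0 < K ->
  (\int[(mu \x mu)%E]_(xy in setT) (quad2 K P Q S u v xy)%:E =
   if ((0 < Q) && (0 < P * Q - S ^+ 2))%R then (gauss2_val K P Q S u v)%:E
   else +oo)%E.
Proof.
move=> K0.
rewrite fubini_tonelli1 //; last 2 first.
  exact: meas_quad2.
  by move=> xy; rewrite lee_fin /quad2 mulr_ge0 // ?expR_ge0 // ltW.
rewrite /fubini_F /=.
have hin : forall x : R, (fun y : R => (quad2 K P Q S u v (x, y))%:E) =
    (fun y => (K * expR (- Q * y ^+ 2 + (v - 2 * S * x) * y + (- P * x ^+ 2 + u * x)))%:E).
  move=> x; apply/funext => y; rewrite /quad2 /=; congr (_ * expR _)%:E; ring.
have [Q0|Q0] := ltP 0 Q; last first.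
  rewrite andFb.
  under eq_integral do rewrite hin gauss1_inf //.
  rewrite integral_cst //=.
  rewrite [X in (_ * X)%E](_ : _ = +oo%E) //.
  by rewrite -set_itvNyy lebesgue_measure_itv.
rewrite andTb.
under eq_integral do rewrite hin gauss1 //.
have hout : forall x : R,
  K * Num.sqrt (pi / Q) * expR ((v - 2 * S * x) ^+ 2 / (4 * Q) + (- P * x ^+ 2 + u * x)) =
  K * Num.sqrt (pi / Q) * expR (- ((P * Q - S ^+ 2) / Q) * x ^+ 2 + (u - v * S / Q) * x
     + v ^+ 2 / (4 * Q)).
  move=> x; congr (_ * expR _); field; lra.
under eq_integral do rewrite hout.
have K'0 : 0 < K * Num.sqrt (pi / Q) by rewrite mulr_gt0 // sqrtr_gt0 divr_gt0 // pi_gt0.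
have [D0|D0] := ltP 0 (P * Q - S ^+ 2); last first.
  by rewrite gauss1_inf // ler_pdivrMr // mul0r.
rewrite gauss1 //; last by rewrite divr_gt0.
congr EFin; rewrite /gauss2_val -!mulrA; congr (_ * _).
have Dq : 0 < (P * Q - S ^+ 2) / Q by rewrite divr_gt0.
rewrite mulrA -sqrtrM; last by rewrite divr_ge0 // ?pi_ge0 // ltW.
have sD : 0 < Num.sqrt (P * Q - S ^+ 2) by rewrite sqrtr_gt0.
have -> : pi / Q * (pi / ((P * Q - S ^+ 2) / Q)) = (pi / Num.sqrt (P * Q - S ^+ 2)) ^+ 2.
  rewrite expr_div_n sqr_sqrtr; last exact: ltW.
  field; rewrite !gt_eqF //; lra.
rewrite sqrtr_sqr ger0_norm; last by rewrite divr_ge0 ?pi_ge0 // ltW.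
rewrite -mulrA; congr (_ * (_ * expR _)); field; rewrite !gt_eqF //; lra.
Qed.


Lemma re_q (alpha x y : R) (a c : R[i]) :
  complex.Re ((alpha%:C)%C * a * (x +i* y)%C + ((alpha / 2)%:C)%C * c * (x +i* y)%C ^+ 2) =
  alpha * (complex.Re a * x - complex.Im a * y) +
  alpha / 2 * (complex.Re c * (x ^+ 2 - y ^+ 2) - 2 * complex.Im c * x * y).
Proof.
case: a => a1 a2; case: c => c1 c2; rewrite expr2 /=.
ring.
Qed.


Lemma integrand_eq (alpha p : R) (a c : R[i]) (xy : R * R) :
  let b := alpha * p / 2 in
  cmod (gfun alpha a c (xy.1 +i* xy.2)%C) `^ p * gauss_density b (xy.1 +i* xy.2)%C =
  quad2 (b / pi) (b * (1 - complex.Re c)) (b * (1 + complex.Re c)) (b * complex.Im c)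
    (2 * b * complex.Re a) (- (2 * b * complex.Im a)) xy.
Proof.
case: xy => x y b.
rewrite (_ : (x, y).1 = x) // (_ : (x, y).2 = y) //.
rewrite /gfun cmod_cexp -expRM /gauss_density cmod2 /quad2 /= re_q.
rewrite mulrCA -expRD; congr (_ * expR _); rewrite /b.
move: (complex.Re a) (complex.Im a) (complex.Re c) (complex.Im c) => a1 a2 c1 c2.
by field.
Qed.


Lemma re_conj (a c : R[i]) :
  complex.Re (complex.conjc c * a ^+ 2) =
  complex.Re c * (complex.Re a ^+ 2 - complex.Im a ^+ 2) +
  2 * complex.Im c * complex.Re a * complex.Im a.
Proof. case: a => a1 a2; case: c => c1 c2; rewrite !expr2 /=; ring. Qed.

Lemma Lp_eq (alpha p : R) (a c : R[i]) :
  let b := alpha * p / 2 in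
  Lp_integral p alpha (gfun alpha a c) =
  (\int[(mu \x mu)%E]_(xy in setT)
    (quad2 (b / pi) (b * (1 - complex.Re c)) (b * (1 + complex.Re c)) (b * complex.Im c)
    (2 * b * complex.Re a) (- (2 * b * complex.Im a)) xy)%:E)%E.
Proof.
move=> b; rewrite /Lp_integral; apply: eq_integral => xy _.
by rewrite integrand_eq.
Qed.

Lemma cond_eq (b : R) (c : R[i]) : 0 < b ->
  ((0 < b * (1 + complex.Re c)) &&
   (0 < b * (1 - complex.Re c) * (b * (1 + complex.Re c)) - (b * complex.Im c) ^+ 2))
  = (cmod c < 1).
Proof.
move=> b0.
have hD : b * (1 - complex.Re c) * (b * (1 + complex.Re c)) - (b * complex.Im c) ^+ 2
   = b ^+ 2 * (1 - cmod c ^+ 2) by rewrite cmod2; ring.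
rewrite hD.
have hc0 := @cmod_ge0 R c.
have hre := @Re_le R c.
have hre2 : complex.Re c ^+ 2 <= cmod c ^+ 2 by rewrite cmod2 lerDl sqr_ge0.
have b2 : 0 < b ^+ 2 by rewrite exprn_gt0.
apply/idP/idP.
- move=> /andP [_ h]; move: h; rewrite pmulr_rgt0 // subr_gt0 => h.
  by rewrite -(@ltr_pXn2r _ 2) // ?nnegrE // expr1n.
- move=> h; have h2 : cmod c ^+ 2 < 1.
    by rewrite -(expr1n _ 2) ltr_pXn2r // nnegrE.
  apply/andP; split.
    rewrite pmulr_rgt0 //.
    have : complex.Re c ^+ 2 < 1 by apply: le_lt_trans h2.
    nra.
  by rewrite pmulr_rgt0 // subr_gt0.
Qed.

Lemma val_eq (b : R) (a c : R[i]) : 0 < b -> cmod c < 1 ->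
  gauss2_val (b / pi) (b * (1 - complex.Re c)) (b * (1 + complex.Re c)) (b * complex.Im c)
    (2 * b * complex.Re a) (- (2 * b * complex.Im a)) =
  (Num.sqrt (1 - cmod c ^+ 2))^-1 *
  expR (b * ((cmod a ^+ 2 + complex.Re (complex.conjc c * a ^+ 2)) / (1 - cmod c ^+ 2))).
Proof.
move=> b0 hc.
have hc0 := @cmod_ge0 R c.
have d0 : 0 < 1 - cmod c ^+ 2.
  rewrite subr_gt0 -(expr1n _ 2) ltr_pXn2r // nnegrE //.
have hD : b * (1 - complex.Re c) * (b * (1 + complex.Re c)) - (b * complex.Im c) ^+ 2
   = b ^+ 2 * (1 - cmod c ^+ 2) by rewrite cmod2; ring.
rewrite /gauss2_val hD sqrtrM ?sqr_ge0 // sqrtr_sqr ger0_norm ?ltW //.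
have s0 : 0 < Num.sqrt (1 - cmod c ^+ 2) by rewrite sqrtr_gt0.
have pi0 : 0 < pi :> R := pi_gt0 R.
have -> : b / pi * pi / (b * Num.sqrt (1 - cmod c ^+ 2)) = (Num.sqrt (1 - cmod c ^+ 2))^-1.
  move: (pi : R) pi0 s0 b0 => q q0 s0 b0; field; rewrite !gt_eqF //.
congr (_ * expR _).
rewrite re_conj !cmod2 in d0 *.
by field; rewrite !gt_eqF.
Qed.

End C.

Theorem lemma5p1 (R : realType) (alpha : R) (a c : R[i]) (p : R) :
  0 < alpha -> 1 <= p ->
  (in_Hpa p alpha (gfun alpha a c) <-> cmod c < 1) /\
  (cmod c < 1 ->
     norm_pa p alpha (gfun alpha a c) =
       (1 - cmod c ^+ 2) `^ (- (1 / (2 * p))) *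
       expR (alpha / 2 * ((cmod a ^+ 2 + complex.Re (complex.conjc c * a ^+ 2)) / (1 - cmod c ^+ 2)))).
Proof.
move=> a0 p1.
have p0 : 0 < p by lra.
have b0 : 0 < alpha * p / 2 by rewrite divr_gt0 // mulr_gt0.
have K0 : 0 < alpha * p / 2 / pi by rewrite divr_gt0 // pi_gt0.
have HL := @Lp_eq R alpha p a c.
rewrite /= gauss2 // cond_eq // in HL.
split.
  split.
    move=> [_]; rewrite HL; case: ifP => // _.
  move=> hc; split; first exact: gfun_entire.
  by rewrite HL hc ltry.
move=> hc.
rewrite /norm_pa HL hc /= val_eq //.
have hc0 := @cmod_ge0 R c.
have d0 : 0 < 1 - cmod c ^+ 2.
  rewrite subr_gt0 -(expr1n _ 2) ltr_pXn2r // nnegrE //.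
rewrite powRM ?invr_ge0 ?sqrtr_ge0 ?expR_ge0 //.
rewrite -expRM -powR12_sqrt ?ltW // -powRN -powRrM.
congr (_ `^ _ * expR _); field; rewrite ?gt_eqF //.
Qed.
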